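(* Let $X$ be a real Banach space ordered by a cone $K$. Suppose $A$ is a bounded, $K$-preserving, semi-nonsupporting operator with $A=T+F$, where $T,F$ are bounded linear operators with $T(K)\subseteq K$, $F(K)\subseteq K$. Then $aT+bF$ is semi-nonsupporting for all real $a,b>0$.
   Context: A cone $K\subseteq X$ is a closed convex set such that $\alpha x\in K$ whenever $x\in K,\ \alpha\ge 0$, and such that $x\in K$, $-x\in K$ imply $x=0$. The dual cone is $K^*=\{f\in X^*: f(x)\ge 0\ \forall x\in K\}$. A bounded operator $B$ with $B(K)\subseteq K$ is semi-nonsupporting if for every pair $(x,f)$ with $x\in K\setminus\{0\}$ and $f\in K^*\setminus\{0\}$ there is $n=n(x,f)\in\mathbb N$ with $f(B^n x)>0$. *)

(* Defs.v *)
From HB Require Import structures.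
From mathcomp Require Import all_boot all_order all_algebra.
From mathcomp Require Import all_classical all_reals all_analysis.
Import Order.TTheory GRing.Theory Num.Theory.
Import numFieldNormedType.Exports.
Local Open Scope ring_scope.
Local Open Scope classical_set_scope.

Section Defs.
Context {R : realType} {X : normedModType R}.

Definition is_cone (K : set X) : Prop :=
  closed K /\
  (forall x y (t : R), K x -> K y -> 0 <= t -> t <= 1 ->
      K (t *: x + (1 - t) *: y)) /\
  (forall x (a : R), K x -> 0 <= a -> K (a *: x)) /\
  (forall x, K x -> K (- x) -> x = 0).

Definition bounded_op (B : X -> X) : Prop :=
  (forall (a : R) x y, B (a *: x + y) = a *: B x + B y) /\ continuous B.

Definition preserves (K : set X) (B : X -> X) : Prop :=
  forall x, K x -> K (B x).

Definition dual_cone (K : set X) : set (X -> R) :=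
  [set f : X -> R | (forall (a : R) x y, f (a *: x + y) = a * f x + f y) /\
           continuous f /\ (forall x, K x -> 0 <= f x)].

Definition semi_nonsupporting (K : set X) (B : X -> X) : Prop :=
  forall x f, K x -> x <> 0 -> dual_cone K f -> f <> (fun _ => 0) ->
    exists n : nat, (0 < n)%N /\ 0 < f (iter n B x).

End Defs.

(* Main.v *)
Require Import Defs.
From HB Require Import structures.
From mathcomp Require Import all_boot all_order all_algebra.
From mathcomp Require Import all_classical all_reals all_analysis.
Import Order.TTheory GRing.Theory Num.Theory.
Import numFieldNormedType.Exports.
Local Open Scope ring_scope.
Local Open Scope classical_set_scope.

Section H.
Context {R : realType} {X : completeNormedModType R}.

Lemma lin_add (T : X -> X) : bounded_op T -> forall x y, T (x + y) = T x + T y.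
Proof. by move=> [L _] x y; rewrite -[x in LHS]scale1r L scale1r. Qed.

Lemma lin_scale (T : X -> X) : bounded_op T -> forall (c : R) x, T (c *: x) = c *: T x.
Proof.
move=> [L C] c x.
have T0 : T 0 = 0.
  have h := L 1 0 0; rewrite !scale1r addr0 in h.
  by have := congr1 (fun z => z - T 0) h; rewrite /= subrr addrK => <-.
by have := L c x 0; rewrite addr0 T0 addr0.
Qed.

Lemma cone_add (K : set X) : is_cone K -> forall x y, K x -> K y -> K (x + y).
Proof.
move=> [_ [Cv [Sc _]]] x y Kx Ky.
have h := Cv x y (2^-1) Kx Ky.
have e : 1 - 2^-1 = 2^-1 :> R.
  by rewrite [X in X - _](splitr 1) mul1r addrK.
have h2 : K (2^-1 *: x + 2^-1 *: y).
  by rewrite -{2}e; apply: h; rewrite ?invr_ge0 ?ler0n // invf_le1 // ler1n.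
have := Sc _ 2 h2 (ler0n _ 2).
by rewrite scalerDr !scalerA mulfV ?pnatr_eq0 // !scale1r.
Qed.
End H.

Theorem corollary3p6 (R : realType) (X : completeNormedModType R)
  (K : set X) (A T F : X -> X) :
  is_cone K ->
  bounded_op A -> preserves K A -> semi_nonsupporting K A ->
  (forall x, A x = T x + F x) ->
  bounded_op T -> bounded_op F -> preserves K T -> preserves K F ->
  forall a b : R, 0 < a -> 0 < b ->
    semi_nonsupporting K (fun x => a *: T x + b *: F x).
Proof.
move=> cone bA pA snA hA bT bF pT pF a b a0 b0.
set B := fun x => a *: T x + b *: F x.
set c := Num.min a b.
have c0 : 0 < c by rewrite lt_min a0 b0.
have Sc := cone.2.2.1.
have Badd : forall x y, B (x + y) = B x + B y.
  move=> x y; rewrite /B (lin_add _ bT) (lin_add _ bF) !scalerDr.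
  by rewrite addrACA.
have Bsc : forall (d : R) x, B (d *: x) = d *: B x.
  move=> d x; rewrite /B (lin_scale _ bT) (lin_scale _ bF) scalerDr !scalerA (mulrC a) (mulrC b).
  by [].
have Bdec : forall y, K y -> exists2 e, K e & B y = e + c *: A y.
  move=> y Ky; exists ((a - c) *: T y + (b - c) *: F y).
    by apply: cone_add => //; apply: Sc; [apply: pT|rewrite subr_ge0 ge_min lexx|apply: pF|rewrite subr_ge0 ge_min lexx orbT].
  rewrite hA /B !scalerBl scalerDr.
  by rewrite addrACA !subrK.
have key : forall x, K x -> forall n,
    exists2 e, K e & iter n B x = e + c ^+ n *: iter n A x.
  move=> x Kx; elim=> [|n [e Ke He]].
    by exists 0; [rewrite -(scale0r x); apply: Sc | rewrite /= add0r scale1r].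
  have KAn : K (iter n A x) by elim: n {He} => //= n IH; apply: pA.
  have [e' Ke' He'] := Bdec _ KAn.
  exists (B e + c ^+ n *: e').
    apply: cone_add => //; last by apply: Sc; rewrite ?exprn_ge0 ?ltW.
    by apply: cone_add => //; apply: Sc; [apply: pT|exact: ltW|apply: pF|exact: ltW].
  rewrite iterS He Badd Bsc He' scalerDr !scalerA -exprSr addrA.
  by rewrite iterS.
move=> x f Kx x0 df f0.
have [n [n0 pos]] := snA x f Kx x0 df f0.
exists n; split => //.
have [e Ke He] := key x Kx n.
have [fL [_ fK]] := df.
rewrite He.
have -> : f (e + c ^+ n *: iter n A x) = c ^+ n * f (iter n A x) + f e.
  by rewrite addrC fL.
by apply: ltr_wpDr; [apply: fK | apply: mulr_gt0; rewrite ?exprn_gt0].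
Qed.
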